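(* Let $p\in(0,1/2)$ and $x>2$. Let $(\xi_n)_{n\geq1}$ be i.i.d. with $\mathbf{P}(\xi_1=1)=p=1-\mathbf{P}(\xi_1=-1)$ and let $\mathcal{F}_n:=\sigma(\xi_1,\dots,\xi_n)$. Set $W_0:=x$, $B_1:=1$, $W_n:=W_{n-1}+\xi_nB_n$, $B_{n+1}:=B_n2^{\xi_n}$ for $n\geq1$, and $X_n:=W_n/B_{n+1}-2$ for $n\in\mathbb{N}$ (so $X_0=x-2$). Let $$R:=\max\left\{2,\ \frac{2p}{(1-2p)\log2}+1\right\}.$$ (i) The process defined by $M_0:=0$ and $$M_n:=\sum_{j=1}^n\left(\log X_j-\log X_{j-1}-\left(\tfrac12-p\right)\log2\right)\mathbf{1}_{\{X_{j-1}\geq R\}},\quad n\geq1,$$ is a submartingale with respect to $(\mathcal{F}_n)$ and satisfies $|M_n-M_{n-1}|\leq(5\log2)/2$ for all $n\geq1$. (ii) For $k\geq1$ let $T_k:=\#\{1\leq j\leq k: X_j\geq R\}$. There exist positive constants $C$ and $\beta$, independent of $x$, $p$ and $k$, such that for all $k\geq1$, $$\mathbf{P}\left(T_k>\tfrac{3k}{4},\ X_n\leq0\text{ for some }n\geq k\right)\leq\frac{C}{(1-2p)^2}e^{-\beta(1-2p)^3k}.$$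
   Context: The summand in $M_n$ is interpreted as $0$ when $X_{j-1}<R$; when $X_{j-1}\geq R$ one has $X_j>0$ so the logarithms are defined. *)

(* Defs.v *)
From HB Require Import structures.
From mathcomp Require Import all_boot all_order all_algebra.
From mathcomp Require Import all_classical all_reals all_analysis.
Set Implicit Arguments. Unset Strict Implicit. Unset Printing Implicit Defensive.
Import Order.TTheory GRing.Theory Num.Theory.
Import numFieldNormedType.Exports.
Local Open Scope classical_set_scope.
Local Open Scope ring_scope.

Section Defs.
Context {R : realType} {d : measure_display} {T : measurableType d}.

(* (xi n)_{n >= 1} is an i.i.d. sequence with P(xi_n = 1) = p = 1 - P(xi_n = -1);
   xi 0 is unused. *)
Definition iid_pm1 (P : probability T R) (p : R) (xi : nat -> T -> R) : Prop :=
  [/\ (forall n, (0 < n)%N -> measurable_fun setT (xi n)),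
      (forall n w, (0 < n)%N -> xi n w = 1 \/ xi n w = -1),
      (forall n, (0 < n)%N -> P (xi n @^-1` [set 1]) = p%:E),
      (forall n, (0 < n)%N -> P (xi n @^-1` [set -1]) = (1 - p)%:E) &
      (forall (I : seq nat) (B : nat -> set R),
          all (fun i => 0 < i)%N I -> uniq I -> (forall i, measurable (B i)) ->
          P (\big[setI/setT]_(i <- I) (xi i @^-1` B i))
          = (\prod_(i <- I) P (xi i @^-1` B i))%E)].

(* Bs n = B_{n+1}: B_1 = 1, B_{n+1} = B_n 2^{xi_n} *)
Fixpoint Bs (xi : nat -> T -> R) (n : nat) (w : T) : R :=
  match n with
  | 0 => 1
  | m.+1 => Bs xi m w * (2 `^ (xi m.+1 w))
  end.

Fixpoint W (x : R) (xi : nat -> T -> R) (n : nat) (w : T) : R :=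
  match n with
  | 0 => x
  | m.+1 => W x xi m w + xi m.+1 w * Bs xi m w
  end.

Definition X (x : R) (xi : nat -> T -> R) (n : nat) (w : T) : R :=
  W x xi n w / Bs xi n w - 2.

Definition Rthr (p : R) : R :=
  Num.max 2 (2 * p / ((1 - 2 * p) * ln 2) + 1).

Definition Mproc (p x : R) (xi : nat -> T -> R) (n : nat) (w : T) : R :=
  \sum_(1 <= j < n.+1)
    (if Rthr p <= X x xi j.-1 w
     then ln (X x xi j w) - ln (X x xi j.-1 w) - (2^-1 - p) * ln 2
     else 0).

Definition natF (xi : nat -> T -> R) (n : nat) : set (set T) :=
  <<s [set A | exists i, (1 <= i <= n)%N /\
               exists B, measurable B /\ A = xi i @^-1` B] >>.

Definition Tcount (p x : R) (xi : nat -> T -> R) (k : nat) (w : T) : nat :=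
  \sum_(1 <= j < k.+1) nat_of_bool (Rthr p <= X x xi j w)%R.

End Defs.

(* Submartingale w.r.t. a filtration F of sub-sigma-algebras: adapted,
   integrable, and E[M_{n+1} | F_n] >= M_n, expressed (conditional expectation
   is not in the library) by its defining property
   E[M_{n+1} 1_A] >= E[M_n 1_A] for every A in F_n. *)
Definition submartingale {R : realType} {d : measure_display} {T : measurableType d}
  (P : probability T R) (F : nat -> set (set T)) (M : nat -> T -> R) : Prop :=
  [/\ (forall n (B : set R), measurable B -> F n (M n @^-1` B)),
      (forall n, P.-integrable setT (EFin \o M n)) &
      (forall n (A : set T), F n A ->
         (\int[P]_(w in A) (M n w)%:E <= \int[P]_(w in A) (M n.+1 w)%:E)%E)].

(* Main.v *)
Require Import Defs.
From HB Require Import structures.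
From mathcomp Require Import all_boot all_order all_algebra.
From mathcomp Require Import all_classical all_reals all_analysis.
From mathcomp Require Import ring lra.
Import Order.TTheory GRing.Theory Num.Theory.
Import numFieldNormedType.Exports.
Set Implicit Arguments. Unset Strict Implicit. Unset Printing Implicit Defensive.
Local Open Scope classical_set_scope.
Local Open Scope ring_scope.
Fixpoint allseq (n : nat) : seq (seq bool) :=
  if n is m.+1 then [seq rcons s b | s <- allseq m, b <- [:: true; false]]
  else [:: [::]].

Lemma mem_allseq n s : (s \in allseq n) = (size s == n).
Proof.
elim: n s => [|n IH] s.
  by rewrite /= inE; case: s.
apply/idP/idP.
  by move=> /allpairsPdep [s' [b [Hs' _ ->]]]; rewrite size_rcons eqSS -IH.
case/lastP: s => [//|s' b]; rewrite size_rcons eqSS => Hs.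
apply/allpairsPdep; exists s', b; split => //; first by rewrite IH.
by case: b; rewrite !inE eqxx ?orbT.
Qed.

Lemma uniq_allseq n : uniq (allseq n).
Proof.
elim: n => [//|n IH] /=.
apply: (@allpairs_uniq _ _ _ (@rcons bool) (allseq n) [:: true; false]) => //.
by move=> [s1 b1] [s2 b2] _ _ /= /eqP; rewrite eqseq_rcons => /andP[/eqP-> /eqP->].
Qed.

Section Real.
Variable R : realType.

Lemma big_allseqS n (F : seq bool -> R) :
  \sum_(s <- allseq n.+1) F s = \sum_(s <- allseq n) (F (rcons s true) + F (rcons s false)).
Proof.
rewrite /=; elim: (allseq n) => [|a L IH]; first by rewrite !big_nil.
by rewrite /= !big_cons -IH addrA.
Qed.

Definition wt (p : R) (s : seq bool) : R :=
  \prod_(i <- iota 1 (size s)) (if nth false s i.-1 then p else 1 - p).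

Lemma wt_nil p : wt p [::] = 1.
Proof. by rewrite /wt big_nil. Qed.

Lemma wt_rcons p s b : wt p (rcons s b) = wt p s * (if b then p else 1 - p).
Proof.
rewrite /wt.
have -> : iota 1 (size (rcons s b)) = iota 1 (size s) ++ [:: (size s).+1].
  by rewrite size_rcons -(addn1 (size s)) iotaD add1n addn1.
rewrite big_cat big_seq1 /= nth_rcons ltnn eqxx.
congr (_ * _); apply: eq_big_seq => i; rewrite mem_iota => /andP[h1 h2].
rewrite nth_rcons; case: i h1 h2 => // i _; rewrite add1n ltnS => -> //.
Qed.

Lemma wt_ge0 p s : 0 <= p <= 1 -> 0 <= wt p s.
Proof.
move=> /andP[p0 p1]; apply: prodr_ge0 => i _; case: ifP => _ //; by rewrite subr_ge0.
Qed.

Definition stp (b : bool) (y : R) : R := if b then (y - 1) / 2 else 2 * y.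
Fixpoint Xf (x0 : R) (e : nat -> bool) (n : nat) : R :=
  if n is m.+1 then stp (e m) (Xf x0 e m) else x0.

Lemma Xf_local x0 e e' n : (forall i, (i < n)%N -> e i = e' i) -> Xf x0 e n = Xf x0 e' n.
Proof.
elim: n => [//|n IH] H /=; rewrite H // IH // => i hi; apply: H; exact: ltnW.
Qed.

Lemma superm (p x0 : R) (g : R -> bool -> R) N :
  0 <= p <= 1 -> (forall y b, 0 <= g y b) ->
  (forall y, p * g y true + (1 - p) * g y false <= 1) ->
  \sum_(s <- allseq N) wt p s * \prod_(t < N) g (Xf x0 (nth false s) t) (nth false s t) <= 1.
Proof.
move=> hp g0 gle; elim: N => [|N IH].
  by rewrite /= big_seq1 wt_nil big_ord0 mulr1.
rewrite big_allseqS (le_trans _ IH) //.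
rewrite big_seq [X in _ <= X]big_seq; apply: ler_sum => s.
rewrite mem_allseq => /eqP Hs.
have key : forall b, \prod_(t < N.+1) g (Xf x0 (nth false (rcons s b)) t) (nth false (rcons s b) t)
   = (\prod_(t < N) g (Xf x0 (nth false s) t) (nth false s t)) * g (Xf x0 (nth false s) N) b.
  move=> b; rewrite big_ord_recr /=; congr (_ * g _ _).
  - apply: eq_bigr => i _.
    rewrite (@Xf_local _ _ (nth false s)); last first.
      by move=> j hj; rewrite nth_rcons Hs (ltn_trans hj (ltn_ord i)).
    by rewrite nth_rcons Hs ltn_ord.
  - by apply: Xf_local => j hj; rewrite nth_rcons Hs hj.
  - by rewrite nth_rcons Hs ltnn eqxx.
rewrite !key !wt_rcons.
set W := wt p s; set Q := \prod_(t < N) _; set y := Xf _ _ N.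
have W0 : 0 <= W by apply: wt_ge0.
have Q0 : 0 <= Q by apply: prodr_ge0 => i _.
have -> : W * p * (Q * g y true) + W * (1 - p) * (Q * g y false) =
  (W * Q) * (p * g y true + (1 - p) * g y false) by ring.
by apply: ler_piMr; [apply: mulr_ge0|apply: gle].
Qed.

End Real.
Section Prob.
Variable R : realType.
Variables (d : measure_display) (T : measurableType d) (P : probability T R).
Variables (p : R) (xi : nat -> T -> R).
Hypothesis Hiid : iid_pm1 P p xi.

Definition sg (b : bool) : R := if b then 1 else -1.
Definition ew (w : T) (i : nat) : bool := xi i.+1 w == 1.
Definition sgn n w : seq bool := mkseq (ew w) n.

Lemma m1_neq1 : (-1 : R) != 1.
Proof. apply/eqP => h. have : (-1 : R) < 1 by lra. by rewrite h ltxx. Qed.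

Lemma xi_sg i w : xi i.+1 w = sg (ew w i).
Proof.
case: Hiid => _ H2 _ _ _; rewrite /ew /sg; case: (H2 i.+1 w erefl) => ->.
  by rewrite eqxx.
by rewrite (negbTE m1_neq1).
Qed.

Lemma sg_inj : injective sg.
Proof.
by case; case => //= h; exfalso; lra.
Qed.

Lemma sgn_eq n w s : size s = n ->
  (sgn n w = s) <-> (forall i, (i < n)%N -> xi i.+1 w = sg (nth false s i)).
Proof.
move=> Hs; split.
  by move=> <- i hi; rewrite xi_sg /sgn nth_mkseq.
move=> H; apply: (@eq_from_nth _ false); first by rewrite size_mkseq Hs.
move=> i; rewrite size_mkseq => hi; rewrite nth_mkseq //.
by apply: sg_inj; rewrite -xi_sg H.
Qed.

Lemma bigsetI_mem (l : seq nat) (F : nat -> set T) :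
  \big[setI/setT]_(i <- l) F i = [set w | forall i, i \in l -> F i w].
Proof.
elim: l => [|a l IH].
  by rewrite big_nil; apply/seteqP; split => w //= _ i.
rewrite big_cons IH; apply/seteqP; split => w /=.
  by move=> [Ha Hl] i; rewrite inE => /orP[/eqP->//|]; apply: Hl.
by move=> H; split; [apply: H; rewrite inE eqxx|move=> i hi; apply: H; rewrite inE hi orbT].
Qed.

Lemma atomE n s : size s = n -> [set w | sgn n w = s] =
  \big[setI/setT]_(i <- iota 1 n) (xi i @^-1` [set sg (nth false s i.-1)]).
Proof.
move=> Hs; rewrite bigsetI_mem; apply/seteqP; split => w /=.
  move/(sgn_eq _ Hs) => H i; rewrite mem_iota => /andP[h1 h2].
  by case: i h1 h2 => // i _; rewrite add1n ltnS => h2; apply: H.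
move=> H; apply/(sgn_eq _ Hs) => i hi; apply: (H i.+1).
by rewrite mem_iota ltnS add1n ltnS.
Qed.

Lemma meas_bigsetI (l : seq nat) (F : nat -> set T) :
  (forall i, i \in l -> measurable (F i)) -> measurable (\big[setI/setT]_(i <- l) F i).
Proof.
elim: l => [|a l IH] H; first by rewrite big_nil.
rewrite big_cons; apply: measurableI; first by apply: H; rewrite inE eqxx.
by apply: IH => i hi; apply: H; rewrite inE hi orbT.
Qed.

Lemma meas_pre i (B : set R) : (0 < i)%N -> measurable B -> measurable (xi i @^-1` B).
Proof.
move=> hi hB; case: Hiid => H1 _ _ _ _.
by rewrite -[_ @^-1` _]setTI; apply: (H1 i hi measurableT B hB).
Qed.

Lemma meas_atom n s : size s = n -> measurable [set w | sgn n w = s].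
Proof.
move=> Hs; rewrite atomE //; apply: meas_bigsetI => i; rewrite mem_iota => /andP[h1 _].
by apply: meas_pre.
Qed.

Lemma P_atom n s : size s = n -> P [set w | sgn n w = s] = (wt p s)%:E.
Proof.
move=> Hs; rewrite atomE //.
case: Hiid => _ _ H3 H4 H5.
rewrite H5; last first.
- by move=> i; apply: measurable_set1.
- exact: iota_uniq.
- by apply/allP => i; rewrite mem_iota => /andP[].
rewrite /wt Hs -prodEFin; apply: eq_big_seq => i; rewrite mem_iota => /andP[h1 _].
by case: (nth false s i.-1); [apply: H3|apply: H4].
Qed.

Lemma EV N (S : pred (seq bool)) : measurable [set w | S (sgn N w)] /\
  P [set w | S (sgn N w)] = (\sum_(s <- allseq N | S s) wt p s)%:E.
Proof.
suff H : forall L, uniq L -> (forall s, s \in L -> size s = N) ->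
    measurable [set w | sgn N w \in L /\ S (sgn N w)] /\
    P [set w | sgn N w \in L /\ S (sgn N w)] = (\sum_(s <- L | S s) wt p s)%:E.
  have E : [set w | S (sgn N w)] = [set w | sgn N w \in allseq N /\ S (sgn N w)].
    apply/seteqP; split => w /=; last by case.
    by move=> ->; rewrite mem_allseq size_mkseq.
  rewrite E; apply: H; first exact: uniq_allseq.
  by move=> s; rewrite mem_allseq => /eqP.
elim => [|a L IH] /=.
  move=> _ _; have -> : [set w | sgn N w \in [::] /\ S (sgn N w)] = set0.
    by apply/seteqP; split => w //=; case.
  by rewrite big_nil measure0.
move=> /andP[aL uL] Hs.
have [mL PL] := IH uL (fun s h => Hs s (@mem_behead _ (a :: L) s h)).
have Ha : size a = N by apply: Hs; rewrite inE eqxx.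
have -> : [set w | sgn N w \in a :: L /\ S (sgn N w)] =
    [set w | S a /\ sgn N w = a] `|` [set w | sgn N w \in L /\ S (sgn N w)].
  apply/seteqP; split => w /=; rewrite ?inE.
    by case => /orP[/eqP -> ->|h1 h2]; [left|right].
  by case => [[h1 h2]|[h1 h2]]; [rewrite h2 eqxx|rewrite h1 orbT].
have mA : measurable [set w | S a /\ sgn N w = a].
  case HS: (S a).
    have -> : [set w | true /\ sgn N w = a] = [set w | sgn N w = a].
      by apply/seteqP; split => w /=; [case|].
    exact: meas_atom.
  have -> : [set w | false /\ sgn N w = a] = set0.
    by apply/seteqP; split => w //=; case.
  exact: measurable0.
split; first exact: measurableU.
rewrite measureU //; last first.
  apply/seteqP; split => w //= [[_ h1] [h2 _]].
  by move: aL; rewrite -h1 h2.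
rewrite big_cons; case HS: (S a).
  have -> : [set w | true /\ sgn N w = a] = [set w | sgn N w = a].
    by apply/seteqP; split => w /=; [case|].
  by rewrite EFinD; congr (_ + _); [exact: P_atom|exact: PL].
have -> : [set w | false /\ sgn N w = a] = set0.
  by apply/seteqP; split => w //=; case.
rewrite -[X in _ = X]add0e; congr (_ + _); [exact: measure0|exact: PL].
Qed.

End Prob.
Section Anal.
Variable R : realType.
Local Notation L := (ln (2 : R)).

Lemma L_gt0 : 0 < L.
Proof. by apply: ln_gt0; rewrite ltr1n. Qed.

Lemma expN_le (a : R) : 0 <= a -> expR (- a) <= 1 - a + a ^+ 2.
Proof.
move=> a0.
have h1 := expR_ge1Dx a.
have h2 : expR (- a) * expR a = 1 by rewrite -expRD addNr expR0.
have h3 := expR_gt0 (- a).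
have h4 : expR (- a) * (1 + a) <= 1.
  by rewrite -[X in _ <= X]h2; apply: ler_wpM2l => //; apply: ltW.
nra.
Qed.

Lemma exp_le (b : R) : 0 <= b -> b <= 2^-1 -> expR b <= 1 + b + 2 * b ^+ 2.
Proof.
move=> b0 b1.
have h1 := expR_ge1Dx (- b).
have h2 : expR b * expR (- b) = 1 by rewrite -expRD addrN expR0.
have h3 := expR_gt0 b.
have h4 : expR b * (1 - b) <= 1.
  by rewrite -[X in _ <= X]h2; apply: ler_wpM2l => //; apply: ltW.
have h5 : b * b * (1 - 2 * b) >= 0.
  apply: mulr_ge0; first exact: mulr_ge0.
  have : 2 * b <= 1 by lra.
  by rewrite subr_ge0.
nra.
Qed.

Lemma expd_le (t : R) : expR t * (1 - t) <= 1.
Proof.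
have h1 := expR_ge1Dx (- t).
have h2 : expR t * expR (- t) = 1 by rewrite -expRD addrN expR0.
by rewrite -[X in _ <= X]h2; apply: ler_wpM2l; [apply: expR_ge0|].
Qed.

Lemma Rthr_ge2 (p : R) : 2 <= Rthr p.
Proof. by rewrite /Rthr le_max lexx. Qed.

Lemma Rthr_ge (p : R) : 2 * p / ((1 - 2 * p) * L) + 1 <= Rthr p.
Proof. by rewrite /Rthr le_max lexx orbT. Qed.

Lemma eta_bound (p y : R) : 0 < p -> p < 2^-1 -> Rthr p <= y ->
  p * (ln y - ln (y - 1)) <= (1 - 2 * p) * L / 2.
Proof.
move=> p0 p1 hy.
have y2 : 2 <= y := le_trans (Rthr_ge2 p) hy.
have eps0 : 0 < 1 - 2 * p by lra.
have hL := L_gt0.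
have eL : 0 < (1 - 2 * p) * L by apply: mulr_gt0.
have y1 : 0 < y - 1 by rewrite subr_gt0 (lt_le_trans _ y2) // ltr1n.
have hy1 : 2 * p / ((1 - 2 * p) * L) <= y - 1.
  by rewrite lerBrDr (le_trans (Rthr_ge p) hy).
have E : y = (y - 1) * (1 + (y - 1)^-1).
  by rewrite mulrDr mulr1 mulfV ?gt_eqF // subrK.
have hln : ln y - ln (y - 1) <= (y - 1)^-1.
  rewrite [X in ln X]E lnM ?posrE //; last first.
    by rewrite addr_gt0 // invr_gt0.
  rewrite addrC addKr; apply: le_ln1Dx.
  have : 0 < (y - 1)^-1 by rewrite invr_gt0.
  lra.
have hp : p <= (1 - 2 * p) * L / 2 * (y - 1).
  move: hy1; rewrite ler_pdivrMr // => h.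
  nra.
apply: (le_trans (ler_wpM2l (ltW p0) hln)).
by rewrite ler_pdivrMr.
Qed.


Definition th (p : R) := (1 - 2 * p) / (32 * L).
Definition dl (p : R) := (1 - 2 * p) ^+ 2 / 128.
Definition gfac (p y : R) (b : bool) :=
  if Rthr p <= y then expR (- th p * (ln (stp b y) - ln y) + dl p) else 1.

Lemma gfac_ge0 p y b : 0 <= gfac p y b.
Proof. by rewrite /gfac; case: ifP => _ //; apply: expR_ge0. Qed.

Lemma gfac_ok p y : 0 < p -> p < 2^-1 ->
  p * gfac p y true + (1 - p) * gfac p y false <= 1.
Proof.
move=> p0 p1; rewrite /gfac; case: ifP => hy; last by rewrite !mulr1 addrC subrK.
have y2 : 2 <= y := le_trans (Rthr_ge2 p) hy.
have y0 : 0 < y by rewrite (lt_le_trans _ y2).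
have y1 : 0 < y - 1 by rewrite subr_gt0 (lt_le_trans _ y2) // ltr1n.
have hL := L_gt0.
have ee := eta_bound p0 p1 hy.
set eta := ln y - ln (y - 1) in ee.
have eta0 : 0 <= eta by rewrite subr_ge0 ler_ln ?posrE // gerBl.
have etaL : eta <= L.
  rewrite lerBlDl -lnM ?posrE ?ltr0n //.
  rewrite ler_ln ?posrE ?mulr_gt0 ?ltr0n //; lra.
have Ef : ln (stp false y) - ln y = L.
  by rewrite /stp lnM ?posrE ?ltr0n // addrK.
have Et : ln (stp true y) - ln y = - (L + eta).
  rewrite /stp lnM ?posrE ?invr_gt0 ?ltr0n // lnV ?posrE ?ltr0n // /eta.
  by rewrite opprD opprB; ring.
rewrite Ef Et.
set a := th p * L.
have aE : a = (1 - 2 * p) / 32.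
  by rewrite /a /th; field; rewrite gt_eqF.
set b := th p * (L + eta).
have th0 : 0 <= th p.
  by rewrite /th divr_ge0 // ?mulr_ge0 ?ler0n ?ltW //; lra.
have ab : a <= b by rewrite /a /b ler_wpM2l // lerDl.
have b2a : b <= 2 * a.
  by have := ler_wpM2l th0 etaL; rewrite /a /b; lra.
have pb : p * b <= p * a + (1 - 2 * p) * a / 2.
  have : th p * (p * eta) <= th p * ((1 - 2 * p) * L / 2) by apply: ler_wpM2l.
  rewrite /b /a; lra.
have a0 : 0 <= a by rewrite aE; lra.
have hEa := expN_le a0.
have hEb := @exp_le b (le_trans a0 ab) ltac:(rewrite aE in b2a; lra).
have hEd := expd_le (dl p).
have dE : dl p = (1 - 2 * p) * a / 4 by rewrite /dl aE; lra.
rewrite (_ : - th p * - (L + eta) = b); last by rewrite mulrNN.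
rewrite (_ : - th p * L = - a); last by rewrite mulNr.
rewrite !expRD.
set Ea := expR (- a) in hEa *; set Eb := expR b in hEb *; set Ed := expR (dl p) in hEd *.
have Ed0 : 0 <= Ed by apply: expR_ge0.
have h1 : p * Eb <= p * (1 + b + 2 * b ^+ 2) by apply: ler_wpM2l => //; apply: ltW.
have h2 : (1 - p) * Ea <= (1 - p) * (1 - a + a ^+ 2) by apply: ler_wpM2l => //; lra.
have h3 : p * b ^+ 2 <= p * (4 * a ^+ 2).
  apply: ler_wpM2l; first exact: ltW.
  have : b ^+ 2 <= (2 * a) ^+ 2 by rewrite ler_sqr // ?nnegrE; lra.
  by rewrite exprMn; lra.
have h4 : p * a ^+ 2 <= 2^-1 * a ^+ 2 by apply: ler_wpM2r; [apply: sqr_ge0|apply: ltW].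
have h5 : a ^+ 2 = (1 - 2 * p) * a / 32 by rewrite expr2 {1}aE; lra.
have hS : p * Eb + (1 - p) * Ea <= 1 - dl p.
  rewrite dE; clear -h1 h2 h3 h4 h5 pb a0; nra.
have -> : p * (Eb * Ed) + (1 - p) * (Ea * Ed) = Ed * (p * Eb + (1 - p) * Ea) by ring.
apply: le_trans hEd; exact: ler_wpM2l.
Qed.

Definition Lam (p x0 : R) (e : nat -> bool) (N : nat) : R := \sum_(t < N)
  (if Rthr p <= Xf x0 e t then ln (Xf x0 e t.+1) - ln (Xf x0 e t) else 0).
Definition Gc (p x0 : R) (e : nat -> bool) (N : nat) : nat := \sum_(t < N) nat_of_bool (Rthr p <= Xf x0 e t)%R.

Lemma Lam_le p x0 e N : Lam p x0 e N <= ln (Num.max (Xf x0 e N) (Rthr p)) - ln (Rthr p).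
Proof.
have R2 := Rthr_ge2 p.
have R0 : 0 < Rthr p by rewrite (lt_le_trans _ R2).
have mx : forall y, Rthr p <= Num.max y (Rthr p) by move=> y; rewrite le_max lexx orbT.
have mx0 : forall y, 0 < Num.max y (Rthr p) by move=> y; exact: lt_le_trans R0 (mx y).
elim: N => [|N IH].
  by rewrite /Lam big_ord0 subr_ge0 ler_ln ?posrE.
rewrite /Lam big_ord_recr /= -/(Lam p x0 e N).
case: ifP => hg.
  have Xp : 0 < Xf x0 e N by rewrite (lt_le_trans R0).
  have Xp1 : 0 < stp (e N) (Xf x0 e N).
    have := le_trans R2 hg; rewrite /stp; case: (e N) => h; lra.
  move: IH; rewrite (_ : Num.max (Xf x0 e N) (Rthr p) = Xf x0 e N); last first.
    by apply/max_idPl.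
  move=> IH.
  have : ln (stp (e N) (Xf x0 e N)) <= ln (Num.max (stp (e N) (Xf x0 e N)) (Rthr p)).
    by rewrite ler_ln ?posrE // le_max lexx.
  lra.
rewrite addr0 (le_trans IH) //.
rewrite (_ : Num.max (Xf x0 e N) (Rthr p) = Rthr p); last first.
  by apply/max_idPr; rewrite ltW // ltNge hg.
by rewrite subrr subr_ge0 ler_ln ?posrE.
Qed.

Lemma prod_gfac p x0 e N :
  \prod_(t < N) gfac p (Xf x0 e t) (e t) = expR (- th p * Lam p x0 e N + dl p * (Gc p x0 e N)%:R).
Proof.
elim: N => [|N IH].
  by rewrite big_ord0 /Lam /Gc !big_ord0 mulr0 mulr0 addr0 expR0.
rewrite big_ord_recr /= IH /gfac /Lam /Gc !big_ord_recr /= -/(Lam p x0 e N) -/(Gc p x0 e N).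
case: ifP => _.
  by rewrite -expRD natrD; congr expR; rewrite (_ : (true : nat)%:R = 1 :> R) //; ring.
by rewrite mulr1 addr0 addn0.
Qed.

Lemma count_le p x0 e k N : (k <= N)%N ->
  (\sum_(0 <= j < k) nat_of_bool (Rthr p <= Xf x0 e j.+1)%R <= Gc p x0 e N + 1)%N.
Proof.
move=> kN.
set b := fun j => nat_of_bool (Rthr p <= Xf x0 e j)%R.
have h1 : (\sum_(0 <= j < k) b j.+1 <= \sum_(0 <= j < k.+1) b j)%N.
  by rewrite big_nat_recl // leq_addl.
have h2 : (\sum_(0 <= j < k.+1) b j = \sum_(0 <= j < k) b j + b k)%N.
  by rewrite big_nat_recr.
have h3 : (\sum_(0 <= j < k) b j <= \sum_(0 <= j < N) b j)%N.
  by rewrite (@big_cat_nat _ _ _ k 0 N) //= leq_addr.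
have h4 : (b k <= 1)%N by apply: leq_b1.
have h5 : Gc p x0 e N = \sum_(0 <= j < N) b j by rewrite /Gc big_mkord.
rewrite h5; move: h1; rewrite h2 => h1.
exact: (leq_trans h1 (leq_add h3 h4)).
Qed.


Definition Ii (p y : R) (b : bool) : R :=
  if Rthr p <= y then ln (stp b y) - ln y - (2^-1 - p) * L else 0.

Lemma stp_facts (p y : R) : 0 < p -> p < 2^-1 -> Rthr p <= y ->
  exists eta : R, [/\ ln (stp false y) - ln y = L, ln (stp true y) - ln y = - (L + eta),
     0 <= eta, eta <= L & p * eta <= (1 - 2 * p) * L / 2].
Proof.
move=> p0 p1 hy.
have y2 : 2 <= y := le_trans (Rthr_ge2 p) hy.
have y0 : 0 < y by rewrite (lt_le_trans _ y2).
have y1 : 0 < y - 1 by rewrite subr_gt0 (lt_le_trans _ y2) // ltr1n.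
have ee := eta_bound p0 p1 hy.
exists (ln y - ln (y - 1)); split => //.
- by rewrite /stp lnM ?posrE ?ltr0n // addrK.
- rewrite /stp lnM ?posrE ?invr_gt0 ?ltr0n // lnV ?posrE ?ltr0n //.
  by rewrite opprD opprB; ring.
- by rewrite subr_ge0 ler_ln ?posrE // gerBl.
- rewrite lerBlDl -lnM ?posrE ?ltr0n //.
  rewrite ler_ln ?posrE ?mulr_gt0 ?ltr0n //; lra.
Qed.

Lemma Ii_bound p y b : 0 < p -> p < 2^-1 -> `|Ii p y b| <= 5 * L / 2.
Proof.
move=> p0 p1; have hL := L_gt0.
rewrite /Ii; case: ifP => hy; last by rewrite normr0; lra.
have [eta [Ef Et e0 eL _]] := stp_facts p0 p1 hy.
rewrite ler_norml; case: b; [rewrite Et|rewrite Ef].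
  have : 0 <= (2^-1 - p) * L <= L / 2.
    apply/andP; split; first by apply: mulr_ge0; lra.
    have : (2^-1 - p) * L <= 2^-1 * L by apply: ler_wpM2r; lra.
    lra.
  lra.
have : 0 <= (2^-1 - p) * L <= L / 2.
  apply/andP; split; first by apply: mulr_ge0; lra.
  have : (2^-1 - p) * L <= 2^-1 * L by apply: ler_wpM2r; lra.
  lra.
lra.
Qed.

Lemma Ii_sub p y : 0 < p -> p < 2^-1 -> 0 <= p * Ii p y true + (1 - p) * Ii p y false.
Proof.
move=> p0 p1; rewrite /Ii; case: ifP => hy; last by rewrite !mulr0 addr0.
have [eta [Ef Et e0 eL pe]] := stp_facts p0 p1 hy.
rewrite Et Ef.
have -> : p * (- (L + eta) - (2^-1 - p) * L) + (1 - p) * (L - (2^-1 - p) * L)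
  = (1 - 2 * p) * L / 2 - p * eta by field.
by rewrite subr_ge0.
Qed.

Definition Fm (p x0 : R) (s : seq bool) (n : nat) : R :=
  \sum_(0 <= j < n) Ii p (Xf x0 (nth false s) j) (nth false s j).

Lemma Fm_rcons p x0 s b n : size s = n ->
  Fm p x0 (rcons s b) n.+1 = Fm p x0 s n + Ii p (Xf x0 (nth false s) n) b.
Proof.
move=> Hs; rewrite /Fm big_nat_recr //=; congr (_ + Ii _ _ _).
- apply: eq_big_nat => j /andP[_ hj].
  rewrite (@Xf_local _ _ (nth false (rcons s b)) (nth false s)); last first.
    by move=> i hi; rewrite nth_rcons Hs (ltn_trans hi hj).
  by rewrite nth_rcons Hs hj.
- by apply: Xf_local => i hi; rewrite nth_rcons Hs hi.
- by rewrite nth_rcons Hs ltnn eqxx.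
Qed.

Lemma Fm_bound p x0 s n : 0 < p -> p < 2^-1 -> `|Fm p x0 s n| <= n%:R * (5 * L / 2).
Proof.
move=> p0 p1; rewrite /Fm; apply: (le_trans (ler_norm_sum _ _ _)).
apply: (@le_trans _ _ (\sum_(0 <= j < n) (5 * L / 2))).
  by apply: ler_sum => j _; apply: Ii_bound.
by rewrite sumr_const_nat subn0 [X in _ <= X]mulr_natl.
Qed.

End Anal.
Section Main.
Variable R : realType.
Variables (d : measure_display) (T : measurableType d) (P : probability T R).
Variables (p x : R) (xi : nat -> T -> R).
Hypothesis Hiid : iid_pm1 P p xi.
Hypotheses (p0 : 0 < p) (p1 : p < 2^-1).
Local Notation x0 := (x - 2).

Lemma Bs_pos n w : 0 < Bs xi n w.
Proof.
elim: n => [|n IH] /=; first exact: ltr01.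
by apply: mulr_gt0 => //; apply: powR_gt0; rewrite ltr0n.
Qed.

Lemma X_Xf n w : X x xi n w = Xf x0 (ew xi w) n.
Proof.
elim: n => [|n IH]; first by rewrite /X /= divr1.
rewrite /= -IH /X /=.
have hB := Bs_pos n w.
case: Hiid => _ H2 _ _ _.
rewrite /ew /stp; case: (H2 n.+1 w erefl) => ->.
  by rewrite eqxx powRr1 ?ler0n //; field; rewrite gt_eqF.
rewrite (negbTE (m1_neq1 R)) powR_inv1 ?ler0n //.
by field; rewrite gt_eqF.
Qed.

Lemma nth_sgn n w j : (j < n)%N -> nth false (sgn xi n w) j = ew xi w j.
Proof. by move=> hj; rewrite /sgn nth_mkseq. Qed.

Lemma Xf_sgn n w m : (m <= n)%N -> Xf x0 (nth false (sgn xi n w)) m = Xf x0 (ew xi w) m.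
Proof. by move=> hm; apply: Xf_local => i hi; apply: nth_sgn; exact: leq_trans hi hm. Qed.

Lemma Mproc_E' n w : Mproc p x xi n w =
  \sum_(0 <= j < n) Ii p (Xf x0 (ew xi w) j) (ew xi w j).
Proof.
by rewrite /Mproc big_add1 /=; apply: eq_bigr => j _; rewrite /Ii !X_Xf.
Qed.

Lemma Mproc_E n w : Mproc p x xi n w = Fm p x0 (sgn xi n w) n.
Proof.
rewrite Mproc_E' /Fm; apply: eq_big_nat => j /andP[_ hj].
by rewrite Xf_sgn ?nth_sgn // ltnW.
Qed.

Lemma Tcount_E k w : Tcount p x xi k w =
  (\sum_(0 <= j < k) nat_of_bool (Rthr p <= Xf x0 (ew xi w) j.+1)%R)%N.
Proof. by rewrite /Tcount big_add1 /=; apply: eq_bigr => j _; rewrite X_Xf. Qed.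

Definition SN (k N : nat) (s : seq bool) : bool :=
  (3 * (k%:R : R) / 4 <
     (\sum_(0 <= j < k) nat_of_bool (Rthr p <= Xf x0 (nth false s) j.+1)%R)%:R)
  && (Xf x0 (nth false s) N <= 0).

Lemma EN_eq k N : (k <= N)%N ->
  [set w | (3 * (k%:R : R) / 4 < (Tcount p x xi k w)%:R)%R /\ X x xi N w <= 0]
  = [set w | SN k N (sgn xi N w)].
Proof.
move=> kN; apply/seteqP; split => w /=; rewrite /SN Tcount_E X_Xf Xf_sgn //.
  have -> : (\sum_(0 <= j < k) nat_of_bool (Rthr p <= Xf x0 (nth false (sgn xi N w)) j.+1)%R
     = \sum_(0 <= j < k) nat_of_bool (Rthr p <= Xf x0 (ew xi w) j.+1)%R)%N.
    by apply: eq_big_nat => j /andP[_ hj]; rewrite Xf_sgn // (leq_trans hj kN).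
  by move=> [-> ->].
have -> : (\sum_(0 <= j < k) nat_of_bool (Rthr p <= Xf x0 (nth false (sgn xi N w)) j.+1)%R
   = \sum_(0 <= j < k) nat_of_bool (Rthr p <= Xf x0 (ew xi w) j.+1)%R)%N.
  by apply: eq_big_nat => j /andP[_ hj]; rewrite Xf_sgn // (leq_trans hj kN).
by move=> /andP[-> ->].
Qed.

Lemma th_ge0 : 0 <= th p.
Proof.
have hL := L_gt0 R.
have h1 := p1.
rewrite /th divr_ge0 //; first lra.
by apply: mulr_ge0; [rewrite ler0n|apply: ltW].
Qed.

Lemma dl_ge0 : 0 <= dl p.
Proof. by rewrite /dl divr_ge0 // sqr_ge0. Qed.

Lemma EN_bound k N : (k <= N)%N ->
  (P [set w | (3 * (k%:R : R) / 4 < (Tcount p x xi k w)%:R)%R /\ (X x xi N w <= 0)%R]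
  <= (expR (dl p - dl p * (3 * k%:R / 4)))%:E)%E.
Proof.
move=> kN; have hp0 := p0; have hp1 := p1.
rewrite EN_eq // (EV Hiid N (SN k N)).2 lee_fin.
set K := expR (dl p * (3 * k%:R / 4 - 1)).
have K0 : 0 < K by apply: expR_gt0.
have -> : expR (dl p - dl p * (3 * k%:R / 4)) = K^-1.
  by rewrite -expRN; congr expR; ring.
have hp : 0 <= p <= 1 by apply/andP; split; lra.
have hsup := superm x0 N hp (@gfac_ge0 R p) (fun y => gfac_ok y p0 p1).
set Pi := fun s : seq bool => \prod_(t < N) gfac p (Xf x0 (nth false s) t) (nth false s t).
apply: (@le_trans _ _ (\sum_(s <- allseq N | SN k N s) wt p s * Pi s * K^-1)).
  rewrite big_seq_cond [X in _ <= X]big_seq_cond; apply: ler_sum => s /andP[_ hS].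
  have w0 : 0 <= wt p s by apply: wt_ge0.
  suff : K <= Pi s.
    move=> h; rewrite -mulrA -[X in X <= _]mulr1; apply: ler_wpM2l => //.
    by rewrite ler_pdivlMr // mul1r.
  move: hS; rewrite /SN => /andP[hT hX].
  rewrite /Pi prod_gfac /K ler_expR.
  have hL := Lam_le p x0 (nth false s) N.
  rewrite (_ : Num.max _ _ = Rthr p) ?subrr in hL; last first.
    apply/max_idPr; apply: (le_trans hX); apply: (le_trans _ (Rthr_ge2 p)); lra.
  have hc := count_le p x0 (nth false s) kN.
  have hc' : ((\sum_(0 <= j < k) nat_of_bool (Rthr p <= Xf x0 (nth false s) j.+1)%R)%:R : R)
     <= (Gc p x0 (nth false s) N)%:R + 1.
    by rewrite natr1 ler_nat; move: hc; rewrite addn1.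
  have g1 : 0 <= - th p * Lam p x0 (nth false s) N.
    by rewrite mulNr oppr_ge0; apply: mulr_ge0_le0 => //; apply: th_ge0.
  have g2 : dl p * (3 * k%:R / 4 - 1) <= dl p * (Gc p x0 (nth false s) N)%:R.
    by apply: ler_wpM2l; [apply: dl_ge0|lra].
  lra.
rewrite -mulr_suml -[X in _ <= X]mul1r; apply: ler_wpM2r; first by rewrite invr_ge0 ltW.
apply: le_trans hsup; rewrite big_mkcond; apply: ler_sum => s _.
case: ifP => _ //; apply: mulr_ge0; first exact: wt_ge0.
by apply: prodr_ge0 => t _; apply: gfac_ge0.
Qed.

Lemma Xf_abs e n m : Xf x0 e n <= 0 -> (n <= m)%N -> Xf x0 e m <= 0.
Proof.
move=> h; elim: m => [|m IH] hnm.
  by move: hnm; rewrite leqn0 => /eqP hn; rewrite hn in h.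
move: hnm; rewrite leq_eqVlt => /orP[/eqP <- //|]; rewrite ltnS => /IH h'.
by rewrite /= /stp; case: (e m); lra.
Qed.

Lemma partii_one k : (1 <= k)%N ->
  (P [set w | (3 * (k%:R : R) / 4 < (Tcount p x xi k w)%:R)%R /\
              exists n : nat, (k <= n)%N /\ (X x xi n w <= 0)%R]
   <= (expR (dl p - dl p * (3 * k%:R / 4)))%:E)%E.
Proof.
move=> k1.
set F := fun i : nat => [set w | (3 * (k%:R : R) / 4 < (Tcount p x xi k w)%:R)%R /\
                                 (X x xi (k + i) w <= 0)%R].
have E : [set w | (3 * (k%:R : R) / 4 < (Tcount p x xi k w)%:R)%R /\
              exists n : nat, (k <= n)%N /\ (X x xi n w <= 0)%R] = \bigcup_i F i.
  apply/seteqP; split => w /=.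
    move=> [hT [n [hn hX]]]; exists (n - k)%N => //; rewrite /F /= subnKC //.
  by move=> [i _ [hT hX]]; split => //; exists (k + i)%N; rewrite leq_addr.
rewrite E.
have mF : forall i, measurable (F i).
  by move=> i; rewrite /F EN_eq ?leq_addr //; exact: (EV Hiid _ _).1.
have hF : {homo F : n m / (n <= m)%N >-> (n <= m)%O}.
  move=> i j hij; rewrite subsetEset => w [hT hX]; split => //.
  move: hX; rewrite !X_Xf => hX; apply: (Xf_abs hX); by rewrite leq_add2l.
have hc := @nondecreasing_cvg_mu _ _ R P F mF (bigcupT_measurable F mF) hF.
rewrite -(cvg_lim _ hc) //; apply: lime_le; first by apply/cvg_ex; eexists; exact: hc.
by apply: nearW => i /=; apply: EN_bound; rewrite leq_addr.
Qed.

Lemma final_bound k :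
  expR (dl p - dl p * (3 * k%:R / 4)) <=
  2 / (1 - 2 * p) ^+ 2 * expR (- (3 / 512 * (1 - 2 * p) ^+ 3 * k%:R)).
Proof.
have hp0 := p0; have hp1 := p1.
have e0 : 0 < 1 - 2 * p by lra.
have e1 : 1 - 2 * p <= 1 by lra.
set e := 1 - 2 * p in e0 e1 *.
have dE : dl p = e ^+ 2 / 128 by [].
rewrite expRD; apply: ler_pM; [exact: expR_ge0|exact: expR_ge0| |].
  have h := expd_le (dl p).
  have e2 : e ^+ 2 <= 1 by rewrite expr_le1 // ltW.
  have e20 : 0 < e ^+ 2 by apply: exprn_gt0.
  have hd : dl p <= 1 / 128 by rewrite dE; lra.
  have hE : expR (dl p) <= 2.
    have := expR_ge0 (dl p); have := dl_ge0; nra.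
  apply: (le_trans hE); rewrite ler_pdivlMr //; nra.
rewrite ler_expR lerN2 dE.
have k0 : 0 <= (k%:R : R) by rewrite ler0n.
have h3 : e ^+ 3 <= e ^+ 2.
  by rewrite exprS -[X in _ <= X]mul1r ler_wpM2r // ?sqr_ge0.
have : e ^+ 3 * k%:R <= e ^+ 2 * k%:R by apply: ler_wpM2r.
lra.
Qed.

End Main.
Section PartI.
Variable R : realType.
Variables (d : measure_display) (T : measurableType d) (P : probability T R).
Variables (p x : R) (xi : nat -> T -> R).
Hypothesis Hiid : iid_pm1 P p xi.
Hypotheses (p0 : 0 < p) (p1 : p < 2^-1).
Local Notation x0 := (x - 2).

Lemma natF_sigma n : sigma_algebra setT (natF xi n).
Proof. exact: smallest_sigma_algebra. Qed.

Lemma natF0 n : natF xi n set0.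
Proof. by case: (natF_sigma n). Qed.

Lemma natFC n A : natF xi n A -> natF xi n (~` A).
Proof. by case: (natF_sigma n) => _ hC _ /hC; rewrite setTD. Qed.

Lemma natFU n A B : natF xi n A -> natF xi n B -> natF xi n (A `|` B).
Proof.
move=> hA hB; case: (natF_sigma n) => _ _ hU.
have -> : A `|` B = \bigcup_k (fun k => if k is 0 then A else B) k.
  apply/seteqP; split => w /=.
    by case => h; [exists 0%N | exists 1%N].
  by case => -[|k] _ h; [left|right].
by apply: hU => -[|k].
Qed.

Lemma natFT n : natF xi n setT.
Proof. by rewrite -setC0; apply: natFC; apply: natF0. Qed.

Lemma natFI n A B : natF xi n A -> natF xi n B -> natF xi n (A `&` B).
Proof.
move=> hA hB; rewrite -[A]setCK -[B]setCK -setCU.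
by apply: natFC; apply: natFU; apply: natFC.
Qed.

Lemma natF_atom n s : size s = n -> natF xi n [set w | sgn xi n w = s].
Proof.
move=> Hs; rewrite (atomE Hiid Hs).
have : forall i, i \in iota 1 n -> (1 <= i <= n)%N.
  by move=> i; rewrite mem_iota add1n ltnS.
elim: (iota 1 n) => [|a l IH] hl; first by rewrite big_nil; apply: natFT.
rewrite big_cons; apply: natFI.
  apply: sub_gen_smallest; exists a; split; first by apply: hl; rewrite inE eqxx.
  by exists [set sg R (nth false s a.-1)]; split => //; apply: measurable_set1.
by apply: IH => i hi; apply: hl; rewrite inE hi orbT.
Qed.

Lemma natF_sets n (S : pred (seq bool)) : natF xi n [set w | S (sgn xi n w)].
Proof.
suff H : forall L : seq (seq bool), (forall s, s \in L -> size s = n) ->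
    natF xi n [set w | sgn xi n w \in L /\ S (sgn xi n w)].
  have E : [set w | S (sgn xi n w)] = [set w | sgn xi n w \in allseq n /\ S (sgn xi n w)].
    apply/seteqP; split => w /=; last by case.
    by move=> ->; rewrite mem_allseq size_mkseq.
  rewrite E; apply: H.
  by move=> s; rewrite mem_allseq => /eqP.
elim => [|a L IH] Hs.
  have -> : [set w | sgn xi n w \in [::] /\ S (sgn xi n w)] = set0.
    by apply/seteqP; split => w //=; case.
  exact: natF0.
have Ha : size a = n by apply: Hs; rewrite inE eqxx.
have -> : [set w | sgn xi n w \in a :: L /\ S (sgn xi n w)] =
    [set w | S a /\ sgn xi n w = a] `|` [set w | sgn xi n w \in L /\ S (sgn xi n w)].
  apply/seteqP; split => w /=; rewrite ?inE.
    by case => /orP[/eqP -> ->|h1 h2]; [left|right].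
  by case => [[h1 h2]|[h1 h2]]; [rewrite h2 eqxx|rewrite h1 orbT].
apply: natFU; last by apply: IH => s h; apply: Hs; rewrite inE h orbT.
case HS: (S a).
  have -> : [set w | true /\ sgn xi n w = a] = [set w | sgn xi n w = a].
    by apply/seteqP; split => w /=; [case|].
  exact: natF_atom.
have -> : [set w | false /\ sgn xi n w = a] = set0.
  by apply/seteqP; split => w //=; case.
exact: natF0.
Qed.

Lemma natF_det n A : natF xi n A ->
  forall w w', sgn xi n w = sgn xi n w' -> A w -> A w'.
Proof.
move=> hA.
set D := [set B : set T | forall w w', sgn xi n w = sgn xi n w' -> B w -> B w'].
suff : natF xi n `<=` D by move/(_ A hA).
apply: smallest_sub.
  split.
  - by move=> w w' _.
  - move=> B hB w w' hs [_ nBw]; split => // Bw'; apply: nBw.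
    exact: (hB w' w (esym hs) Bw').
  - by move=> F hF w w' hs [k _ h]; exists k => //; exact: hF k w w' hs h.
move=> B [i [/andP[h1 h2] [B0 [mB0 ->]]]] w w' hs /=.
have : xi i w = xi i w'.
  case: i h1 h2 => // i _ h2.
  by rewrite !(xi_sg Hiid) -(nth_sgn xi w h2) -(nth_sgn xi w' h2) hs.
by move=> <-.
Qed.

Lemma meas_fun_sgn N (F : seq bool -> R) : measurable_fun setT (fun w => F (sgn xi N w)).
Proof.
move=> _ Y mY; rewrite setTI.
have -> : (fun w => F (sgn xi N w)) @^-1` Y = [set w | `[< Y (F (sgn xi N w)) >]].
  by apply/seteqP; split => w /=; rewrite asboolE.
exact: (EV Hiid N (fun s => `[< Y (F s) >])).1.
Qed.

Lemma INT N (S : pred (seq bool)) (F : seq bool -> R) :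
  (\int[P]_(w in [set w | S (sgn xi N w)]) (F (sgn xi N w))%:E =
   (\sum_(s <- allseq N | S s) F s * wt p s)%:E)%E.
Proof.
have mf := (measurable_realfun.measurable_EFinP setT (fun w => F (sgn xi N w))).2 (meas_fun_sgn N F).
suff H : forall L, uniq L -> (forall s, s \in L -> size s = N) ->
    (\int[P]_(w in [set w | sgn xi N w \in L /\ S (sgn xi N w)]) (F (sgn xi N w))%:E =
    (\sum_(s <- L | S s) F s * wt p s)%:E)%E.
  have E : [set w | S (sgn xi N w)] = [set w | sgn xi N w \in allseq N /\ S (sgn xi N w)].
    apply/seteqP; split => w /=; last by case.
    by move=> ->; rewrite mem_allseq size_mkseq.
  rewrite E; apply: H; first exact: uniq_allseq.
  by move=> s; rewrite mem_allseq => /eqP.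
elim => [|a L IH] /=.
  move=> _ _; have -> : [set w | sgn xi N w \in [::] /\ S (sgn xi N w)] = set0.
    by apply/seteqP; split => w //=; case.
  by rewrite integral_set0 big_nil.
move=> /andP[aL uL] Hs.
have IH' := IH uL (fun s h => Hs s (@mem_behead _ (a :: L) s h)).
have Ha : size a = N by apply: Hs; rewrite inE eqxx.
have mL : measurable [set w | sgn xi N w \in L /\ S (sgn xi N w)].
  have -> : [set w | sgn xi N w \in L /\ S (sgn xi N w)] =
      [set w | (fun s => (s \in L) && S s) (sgn xi N w)].
    by apply/seteqP; split => w /=; [case => -> ->|move/andP].
  exact: (EV Hiid N (fun s => (s \in L) && S s)).1.
have -> : [set w | sgn xi N w \in a :: L /\ S (sgn xi N w)] =
    [set w | S a /\ sgn xi N w = a] `|` [set w | sgn xi N w \in L /\ S (sgn xi N w)].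
  apply/seteqP; split => w /=; rewrite ?inE.
    by case => /orP[/eqP -> ->|h1 h2]; [left|right].
  by case => [[h1 h2]|[h1 h2]]; [rewrite h2 eqxx|rewrite h1 orbT].
have mA : measurable [set w | S a /\ sgn xi N w = a].
  have -> : [set w | S a /\ sgn xi N w = a] =
      [set w | (fun s => S a && (s == a)) (sgn xi N w)].
    by apply/seteqP; split => w /=; [case => -> ->; rewrite eqxx|move/andP => [-> /eqP]].
  exact: (EV Hiid N (fun s => S a && (s == a))).1.
rewrite integral_setU //; last 2 first.
- exact: measurable_funS mf.
- apply/eqP; apply/seteqP; split => w //= [[_ h1] [h2 _]].
  by move: aL; rewrite -h1 h2.
rewrite big_cons; case HS: (S a).
  have -> : [set w | true /\ sgn xi N w = a] = [set w | sgn xi N w = a].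
    by apply/seteqP; split => w /=; [case|].
  rewrite EFinD; congr (_ + _)%E; last exact: IH'.
  rewrite (@eq_integral _ _ _ _ _ (cst (F a)%:E)); last first.
    by move=> w; rewrite inE => /= ->.
  rewrite integral_cst; last exact: (meas_atom Hiid Ha).
  by rewrite EFinM; congr (_ * _)%E; exact: P_atom.
have -> : [set w | false /\ sgn xi N w = a] = set0.
  by apply/seteqP; split => w //=; case.
by rewrite integral_set0 add0e.
Qed.

Lemma sgn_take n w : sgn xi n w = take n (sgn xi n.+1 w).
Proof.
apply: (@eq_from_nth _ false).
  by rewrite size_takel ?size_mkseq.
move=> i; rewrite size_mkseq => hi.
by rewrite nth_take // !nth_sgn // ltnW.
Qed.

Lemma submart_step n A : natF xi n A ->
  (\int[P]_(w in A) (Mproc p x xi n w)%:E <= \int[P]_(w in A) (Mproc p x xi n.+1 w)%:E)%E.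
Proof.
move=> hA.
set S := fun s : seq bool => `[< exists w0, A w0 /\ sgn xi n w0 = s >].
have AE : A = [set w | S (sgn xi n w)].
  apply/seteqP; split => w /=; rewrite /S asboolE.
    by move=> Aw; exists w.
  by case=> w0 [Aw0 hs]; apply: (natF_det hA hs Aw0).
have AE' : A = [set w | (fun s => S (take n s)) (sgn xi n.+1 w)].
  by rewrite {1}AE; apply/seteqP; split => w /=; rewrite -sgn_take.
have -> : (\int[P]_(w in A) (Mproc p x xi n w)%:E =
    \int[P]_(w in [set w | S (sgn xi n w)]) (Fm p x0 (sgn xi n w) n)%:E)%E.
  by rewrite {1}AE; apply: eq_integral => w _; rewrite (Mproc_E x Hiid).
have -> : (\int[P]_(w in A) (Mproc p x xi n.+1 w)%:E =
    \int[P]_(w in [set w | (fun s => S (take n s)) (sgn xi n.+1 w)])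
       (Fm p x0 (sgn xi n.+1 w) n.+1)%:E)%E.
  by rewrite {1}AE'; apply: eq_integral => w _; rewrite (Mproc_E x Hiid).
rewrite (INT n S (fun s => Fm p x0 s n)).
rewrite (INT n.+1 (fun s => S (take n s)) (fun s => Fm p x0 s n.+1)) lee_fin.
rewrite [X in _ <= X]big_mkcond big_allseqS [X in X <= _]big_mkcond.
rewrite big_seq [X in _ <= X]big_seq; apply: ler_sum => s; rewrite mem_allseq => /eqP Hs.
have tk : forall b, take n (rcons s b) = s by move=> b; rewrite -cats1 take_size_cat.
rewrite !tk; case: (S s); last by rewrite addr0.
rewrite !Fm_rcons // !wt_rcons.
set F := Fm p x0 s n; set W := wt p s; set y := Xf x0 (nth false s) n.
have hp0 := p0; have hp1 := p1.
have W0 : 0 <= W by apply: wt_ge0; apply/andP; split; lra.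
have hI := Ii_sub y p0 p1.
have -> : (F + Ii p y true) * (W * p) + (F + Ii p y false) * (W * (1 - p)) =
  F * W + W * (p * Ii p y true + (1 - p) * Ii p y false) by ring.
by rewrite lerDl; apply: mulr_ge0.
Qed.

Lemma adapted n (B : set R) : natF xi n (Mproc p x xi n @^-1` B).
Proof.
have -> : Mproc p x xi n @^-1` B = [set w | (fun s => `[< B (Fm p x0 s n) >]) (sgn xi n w)].
  by apply/seteqP; split => w /=; rewrite asboolE (Mproc_E x Hiid).
exact: (@natF_sets n (fun s => `[< B (Fm p x0 s n) >])).
Qed.

Lemma integ n : P.-integrable setT (EFin \o Mproc p x xi n).
Proof.
have mM : measurable_fun setT (Mproc p x xi n).
  have -> : Mproc p x xi n = (fun w => Fm p x0 (sgn xi n w) n).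
    by apply/funext => w; rewrite (Mproc_E x Hiid).
  exact: (@meas_fun_sgn n (fun s => Fm p x0 s n)).
have hL := L_gt0 R.
apply: (le_integrable (g := EFin \o cst (n%:R * (5 * ln 2 / 2))) measurableT).
- exact/measurable_realfun.measurable_EFinP.
- move=> w _ /=; rewrite lee_fin (Mproc_E x Hiid).
  rewrite (@ger0_norm _ (n%:R * _)); first exact: Fm_bound.
  by apply: mulr_ge0; [rewrite ler0n|lra].
- exact: finite_measure_integrable_cst.
Qed.

Lemma Mdiff n w : (1 <= n)%N ->
  `|Mproc p x xi n w - Mproc p x xi n.-1 w| <= 5 * ln 2 / 2.
Proof.
case: n => [//|m] _ /=.
rewrite !(Mproc_E' x Hiid) big_nat_recr //= addrAC subrr add0r.
exact: Ii_bound.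
Qed.

End PartI.

Theorem lemma3p2 (R : realType) :
  (* (i) *)
  (forall (d : measure_display) (T : measurableType d) (P : probability T R)
          (p x : R) (xi : nat -> T -> R),
      0 < p -> p < 2^-1 -> 2 < x -> iid_pm1 P p xi ->
      submartingale P (natF xi) (Mproc p x xi) /\
      (forall n w, (1 <= n)%N ->
         `|Mproc p x xi n w - Mproc p x xi n.-1 w| <= 5 * ln 2 / 2)) /\
  (* (ii) *)
  (exists C beta : R, 0 < C /\ 0 < beta /\
    forall (d : measure_display) (T : measurableType d) (P : probability T R)
           (p x : R) (xi : nat -> T -> R),
      0 < p -> p < 2^-1 -> 2 < x -> iid_pm1 P p xi ->
      forall k : nat, (1 <= k)%N ->
        (P [set w | (3 * (k%:R : R) / 4 < (Tcount p x xi k w)%:R)%R /\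
                    exists n : nat, (k <= n)%N /\ (X x xi n w <= 0)%R]
         <= (C / (1 - 2 * p) ^+ 2 * expR (- (beta * (1 - 2 * p) ^+ 3 * k%:R)))%R%:E)%E).
Proof.
split.
  move=> d T P p x xi p0 p1 _ Hiid; split; last first.
    by move=> n w hn; apply: (Mdiff x Hiid p0 p1).
  split.
  - by move=> n B _; apply: (adapted x Hiid).
  - by move=> n; apply: (integ x Hiid p0 p1).
  - by move=> n A hA; apply: (submart_step x Hiid p0 p1).
exists 2, (3 / 512); split; first by rewrite ltr0n.
split; first by rewrite divr_gt0 // ltr0n.
move=> d T P p x xi p0 p1 _ Hiid k k1.
apply: le_trans (partii_one x Hiid p0 p1 k1) _.
by rewrite lee_fin; apply: (final_bound p0 p1).
Qed.
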